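(* Let $b_n$ be the number of big-walks of length $2n$. Then $b_{m+n}\ge b_m b_n$ for all $m,n\ge 0$, and $b_n\le 16^n$; consequently $\lim_{n\to\infty}\sqrt[n]{b_n}$ exists and is finite. Moreover, if $\hat b_n$ denotes the number of left-walks of length $2n$, then $2\hat b_n\ge b_n$ and $\lim_{n\to\infty}\sqrt[n]{\hat b_n}=\lim_{n\to\infty}\sqrt[n]{b_n}$.
   Context: All walks are finite sequences of unit steps from $\{N,E,S,W\}=\{(0,1),(1,0),(0,-1),(-1,0)\}$ on $\mathbb{Z}^2$, starting at $(0,0)$. A walk is \emph{eager} if it contains no two consecutive steps $E$ then $S$, and no two consecutive steps $N$ then $W$. A \emph{QP-subloop} of a walk is a contiguous subsequence of steps starting and ending at the same point $(p,q)$ and visiting only points $(x,y)$ with $x\ge p$, $y\ge q$. A walk is \emph{standard} if every QP-subloop (of positive length) begins with an $N$ step. A \emph{big-walk} is a standard eager walk staying in the half-plane $\{x+y\ge 0\}$ and ending at some point $(x,-x)$. A \emph{left-walk} is a big-walk ending at a point $(x,-x)$ with $x\le 0$. *)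

(* Defs.v *)
From Stdlib Require Import Reals ZArith List Lia.
Import ListNotations.

Inductive step : Set := StN | StE | StS | StW.

Definition delta (s : step) : Z * Z :=
  match s with
  | StN => (0%Z, 1%Z)
  | StE => (1%Z, 0%Z)
  | StS => (0%Z, (-1)%Z)
  | StW => ((-1)%Z, 0%Z)
  end.

Fixpoint endpoint (w : list step) : Z * Z :=
  match w with
  | [] => (0%Z, 0%Z)
  | s :: w' => let (a, b) := delta s in
               let (x, y) := endpoint w' in ((a + x)%Z, (b + y)%Z)
  end.

Definition pt (w : list step) (k : nat) : Z * Z := endpoint (firstn k w).

Definition eager (w : list step) : Prop :=
  (~ exists u v, w = u ++ StE :: StS :: v) /\
  (~ exists u v, w = u ++ StN :: StW :: v).

(* the contiguous subsequence of steps i+1..j (0-based indices i..j-1),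
   going from pt w i to pt w j, is a QP-subloop (of positive length iff i<j) *)
Definition QP_subloop (w : list step) (i j : nat) : Prop :=
  (i <= j)%nat /\ (j <= length w)%nat /\ pt w i = pt w j /\
  forall k, (i <= k <= j)%nat ->
    (fst (pt w i) <= fst (pt w k))%Z /\ (snd (pt w i) <= snd (pt w k))%Z.

Definition standard (w : list step) : Prop :=
  forall i j, (i < j)%nat -> QP_subloop w i j -> nth i w StN = StN.

Definition big_walk (w : list step) : Prop :=
  standard w /\ eager w /\
  (forall k, (k <= length w)%nat -> (0 <= fst (pt w k) + snd (pt w k))%Z) /\
  (fst (endpoint w) + snd (endpoint w) = 0)%Z.

Definition left_walk (w : list step) : Prop :=
  big_walk w /\ (fst (endpoint w) <= 0)%Z.

Definition counts (P : list step -> Prop) (c : nat -> nat) : Prop :=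
  forall n, exists l : list (list step),
    NoDup l /\ (forall w, In w l <-> (length w = 2 * n)%nat /\ P w) /\
    length l = c n.

(* n-th root of c n, indexed so that nroot c n = (c (n+1))^(1/(n+1)) *)
Definition nroot (c : nat -> nat) (n : nat) : R :=
  Rpower (INR (c (S n))) (/ INR (S n)).

(* Main.v *)
Require Import Defs.
From Stdlib Require Import Reals ZArith List Lia Lra Classical ClassicalEpsilon FinFun.
Import ListNotations.
Open Scope Z_scope.

Lemma endpoint_cons s w : endpoint (s :: w) =
  (fst (delta s) + fst (endpoint w), snd (delta s) + snd (endpoint w)).
Proof. simpl. destruct (delta s), (endpoint w). reflexivity. Qed.

Lemma endpoint_app u v : endpoint (u ++ v) =
  (fst (endpoint u) + fst (endpoint v), snd (endpoint u) + snd (endpoint v)).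
Proof.
  induction u as [|s u IH]; simpl app.
  - simpl. destruct (endpoint v); reflexivity.
  - rewrite !endpoint_cons, IH. simpl. f_equal; lia.
Qed.

Lemma pt_app u v k : pt (u ++ v) k =
  (fst (pt u k) + fst (pt v (k - length u)), snd (pt u k) + snd (pt v (k - length u))).
Proof. unfold pt. rewrite firstn_app. apply endpoint_app. Qed.

Lemma pt_0 w : pt w 0 = (0,0).
Proof. reflexivity. Qed.

Lemma pt_all w k : (length w <= k)%nat -> pt w k = endpoint w.
Proof. intros; unfold pt; rewrite firstn_all2; auto. Qed.

Lemma pair_eq (p q : Z*Z) : fst p = fst q -> snd p = snd q -> p = q.
Proof. destruct p, q; simpl; intros; subst; auto. Qed.

Lemma pair_eq_iff (p q : Z*Z) : p = q <-> fst p = fst q /\ snd p = snd q.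
Proof. split; [intros; subst; auto| intros []; apply pair_eq; auto]. Qed.

Lemma pt_app_l u v k : (k <= length u)%nat -> pt (u ++ v) k = pt u k.
Proof.
  intros H. rewrite pt_app. replace (k - length u)%nat with 0%nat by lia.
  rewrite pt_0. apply pair_eq; simpl; lia.
Qed.

Lemma pt_app_r u v k : (length u <= k)%nat -> pt (u ++ v) k =
  (fst (endpoint u) + fst (pt v (k - length u)), snd (endpoint u) + snd (pt v (k - length u))).
Proof. intros H. rewrite pt_app, (pt_all u k); auto. Qed.

Lemma QP_app_l u v i j : (j <= length u)%nat -> QP_subloop (u ++ v) i j <-> QP_subloop u i j.
Proof.
  intros Hj; unfold QP_subloop. rewrite length_app.
  split; intros (H1 & H2 & H3 & H4); (split; [lia|split;[lia|split]]).
  - rewrite <- (pt_app_l u v i), <- (pt_app_l u v j); auto; lia.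
  - intros kk Hk. rewrite <- (pt_app_l u v i), <- (pt_app_l u v kk) by lia. apply H4; lia.
  - rewrite (pt_app_l u v i), (pt_app_l u v j); auto; lia.
  - intros kk Hk. rewrite (pt_app_l u v i), (pt_app_l u v kk) by lia. apply H4; lia.
Qed.

Lemma QP_app_r u v i j : (length u <= i)%nat -> (i <= j)%nat ->
  QP_subloop (u ++ v) i j <-> QP_subloop v (i - length u) (j - length u).
Proof.
  intros Hi Hij; unfold QP_subloop. rewrite length_app.
  split; intros (H1 & H2 & H3 & H4); (split; [lia|split;[lia|split]]).
  - rewrite (pt_app_r u v i), (pt_app_r u v j) in H3 by lia.
    rewrite pair_eq_iff in H3; simpl in H3. apply pair_eq; lia.
  - intros kk Hk. specialize (H4 (kk + length u)%nat ltac:(lia)).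
    rewrite (pt_app_r u v i), (pt_app_r u v (kk + length u)) in H4 by lia.
    simpl in H4. replace (kk + length u - length u)%nat with kk in H4 by lia. lia.
  - rewrite (pt_app_r u v i), (pt_app_r u v j) by lia.
    rewrite pair_eq_iff in H3. apply pair_eq; simpl; lia.
  - intros kk Hk. specialize (H4 (kk - length u)%nat ltac:(lia)).
    rewrite (pt_app_r u v i), (pt_app_r u v kk) by lia. simpl. lia.
Qed.

Lemma standard_app_l u v : standard (u ++ v) -> standard u.
Proof.
  intros H i j Hij HQ. destruct HQ as (a & b & c & d) eqn:E.
  assert (HQ' : QP_subloop (u ++ v) i j) by (apply QP_app_l; auto).
  specialize (H i j Hij HQ'). rewrite app_nth1 in H by lia. auto.
Qed.

Lemma standard_app_r u v : standard (u ++ v) -> standard v.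
Proof.
  intros H i j Hij HQ.
  assert (HQ' : QP_subloop (u ++ v) (i + length u) (j + length u)).
  { apply QP_app_r; [lia|lia|]. replace (i + length u - length u)%nat with i by lia.
    replace (j + length u - length u)%nat with j by lia. auto. }
  specialize (H (i + length u)%nat (j + length u)%nat ltac:(lia) HQ'). rewrite app_nth2 in H by lia.
  replace (i + length u - length u)%nat with i in H by lia. auto.
Qed.
Open Scope Z_scope.

Lemma pt_S w k : (k < length w)%nat -> pt w (S k) =
  (fst (pt w k) + fst (delta (nth k w StN)), snd (pt w k) + snd (delta (nth k w StN))).
Proof.
  revert k; induction w as [|s w IH]; intros k Hk; simpl in Hk; [lia|].
  destruct k as [|k].
  - unfold pt; simpl firstn. rewrite endpoint_cons. simpl. apply pair_eq; simpl; lia.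
  - unfold pt in *. change (firstn (S (S k)) (s :: w)) with (s :: firstn (S k) w).
    change (firstn (S k) (s :: w)) with (s :: firstn k w).
    rewrite !endpoint_cons, IH by lia. simpl. apply pair_eq; simpl; lia.
Qed.

Lemma QP_merge w i k j : QP_subloop w 0 k -> QP_subloop w i j -> (i <= k <= j)%nat ->
  QP_subloop w 0 j.
Proof.
  intros (A1 & A2 & A3 & A4) (B1 & B2 & B3 & B4) H.
  rewrite pt_0 in A3, A4.
  assert (Hi := A4 i ltac:(lia)). assert (Hk := B4 k ltac:(lia)).
  rewrite <- A3 in Hk. simpl in *.
  assert (Hpi : pt w i = (0,0)) by (apply pair_eq; simpl; lia).
  split; [lia|split;[lia|split]].
  - rewrite pt_0, <- B3, Hpi. auto.
  - intros m Hm. rewrite pt_0. simpl. destruct (Nat.le_gt_cases m k).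
    + apply A4; lia.
    + rewrite Hpi in B4. apply (B4 m). lia.
Qed.

Lemma QP_first w k : QP_subloop w 0 k -> (0 < k)%nat -> nth 0 w StN = StN \/ nth 0 w StN = StE.
Proof.
  intros (A1 & A2 & A3 & A4) Hk. specialize (A4 1%nat ltac:(lia)).
  rewrite pt_S in A4 by lia. rewrite pt_0 in A4. simpl in A4.
  destruct (nth 0 w StN); simpl in A4; auto; lia.
Qed.

Lemma QP_last w k : QP_subloop w 0 k -> (0 < k)%nat ->
  nth (k-1) w StN = StS \/ nth (k-1) w StN = StW.
Proof.
  intros (A1 & A2 & A3 & A4) Hk. specialize (A4 (k-1)%nat ltac:(lia)).
  assert (E := pt_S w (k-1) ltac:(lia)). replace (S (k-1)) with k in E by lia.
  rewrite <- A3, pt_0 in E. rewrite pt_0 in A4. simpl in A4.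
  rewrite pair_eq_iff in E. simpl in E.
  destruct (nth (k-1) w StN); simpl in E; auto; lia.
Qed.
Open Scope Z_scope.

Definition swp (s : step) : step :=
  match s with StN => StE | StE => StN | StS => StW | StW => StS end.

Lemma swp_swp s : swp (swp s) = s. Proof. destruct s; reflexivity. Qed.
Lemma delta_swp s : delta (swp s) = (snd (delta s), fst (delta s)).
Proof. destruct s; reflexivity. Qed.

Fixpoint maxl (w : list step) (k : nat) : nat :=
  match k with
  | O => O
  | S k' => if excluded_middle_informative (QP_subloop w 0 (S k')) then S k' else maxl w k'
  end.

Definition maxloop w := maxl w (length w).

Lemma maxl_le w k : (maxl w k <= k)%nat.
Proof. induction k; simpl; [lia|]. destruct excluded_middle_informative; lia. Qed.

Lemma maxl_QP w k : (0 < maxl w k)%nat -> QP_subloop w 0 (maxl w k).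
Proof. induction k; simpl; [lia|]. destruct excluded_middle_informative; auto. Qed.

Lemma maxl_max w k j : (maxl w k < j <= k)%nat -> ~ QP_subloop w 0 j.
Proof.
  induction k; simpl; [lia|]. destruct excluded_middle_informative; [lia|].
  intros H. destruct (Nat.eq_dec j (S k)); [subst; auto|]. apply IHk; lia.
Qed.

Lemma maxloop_le w : (maxloop w <= length w)%nat.
Proof. apply maxl_le. Qed.
Lemma maxloop_QP w : (0 < maxloop w)%nat -> QP_subloop w 0 (maxloop w).
Proof. apply maxl_QP. Qed.
Lemma maxloop_max w j : (maxloop w < j)%nat -> ~ QP_subloop w 0 j.
Proof.
  intros H HQ. destruct (Nat.le_gt_cases j (length w)).
  - eapply (maxl_max w (length w) j); eauto.
  - destruct HQ as (_ & ? & _). lia.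
Qed.

Lemma maxl_ext w w' k : (forall j, QP_subloop w 0 j <-> QP_subloop w' 0 j) -> maxl w k = maxl w' k.
Proof.
  intros H; induction k; simpl; auto.
  destruct excluded_middle_informative as [a|a], excluded_middle_informative as [c|c]; auto.
  - exfalso; apply c, H, a.
  - exfalso; apply a, H, c.
Qed.

Lemma maxloop_ext w w' : (forall j, QP_subloop w 0 j <-> QP_subloop w' 0 j) ->
  length w = length w' -> maxloop w = maxloop w'.
Proof. intros H E; unfold maxloop; rewrite E; apply maxl_ext; auto. Qed.

Fixpoint phi_f (n : nat) (s : list step) : list step :=
  match n with
  | O => s
  | S n' => match s with
            | [] => []
            | h :: tl => if Nat.eqb (maxloop s) 0 then swp h :: phi_f n' tl
                         else firstn (maxloop s) s ++ phi_f n' (skipn (maxloop s) s)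
            end
  end.

Definition phi s := phi_f (length s) s.

Lemma phi_f_stable n m s : (length s <= n)%nat -> (length s <= m)%nat -> phi_f n s = phi_f m s.
Proof.
  revert m s; induction n as [|n IH]; intros m s Hn Hm.
  - destruct s; simpl in Hn; [|lia]. destruct m; reflexivity.
  - destruct m as [|m]; [destruct s; simpl in Hm; [reflexivity|lia]|].
    destruct s as [|h tl]; [reflexivity|]. simpl phi_f.
    destruct (Nat.eqb_spec (maxloop (h :: tl)) 0) as [E|E].
    + f_equal. simpl length in *; apply IH; lia.
    + f_equal. apply IH; rewrite length_skipn; simpl length in *; lia.
Qed.

Lemma phi_nil : phi [] = [].
Proof. reflexivity. Qed.

Lemma phi_free h tl : maxloop (h :: tl) = 0%nat -> phi (h :: tl) = swp h :: phi tl.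
Proof.
  intros E. unfold phi. simpl length. simpl phi_f. rewrite E. simpl. reflexivity.
Qed.

Lemma phi_block s : (0 < maxloop s)%nat ->
  phi s = firstn (maxloop s) s ++ phi (skipn (maxloop s) s).
Proof.
  intros E. destruct s as [|h tl]; [unfold maxloop in E; simpl in E; lia|].
  unfold phi at 1. simpl length. simpl phi_f.
  destruct (Nat.eqb_spec (maxloop (h :: tl)) 0); [lia|]. f_equal.
  unfold phi. apply phi_f_stable; rewrite length_skipn; simpl length; lia.
Qed.

Lemma len_ind (P : list step -> Prop) :
  (forall s, (forall s', (length s' < length s)%nat -> P s') -> P s) -> forall s, P s.
Proof.
  intros H. assert (forall n s, (length s <= n)%nat -> P s).
  { induction n; intros s Hs; apply H; intros s' Hs'; [lia|]. apply IHn; lia. }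
  intros s; apply (H0 (length s)); lia.
Qed.

Lemma phi_length s : length (phi s) = length s.
Proof.
  induction s as [s IH] using len_ind.
  destruct s as [|h tl]; [reflexivity|].
  destruct (Nat.eq_dec (maxloop (h::tl)) 0) as [E|E].
  - rewrite phi_free by auto. simpl. rewrite IH; simpl; auto.
  - rewrite phi_block by lia. rewrite length_app, IH.
    + rewrite length_firstn, length_skipn. pose proof (maxloop_le (h::tl)). lia.
    + rewrite length_skipn. simpl length. lia.
Qed.
Open Scope Z_scope.

Lemma pt_cons h tl m : pt (h :: tl) (S m) =
  (fst (delta h) + fst (pt tl m), snd (delta h) + snd (pt tl m)).
Proof. unfold pt. simpl firstn. apply endpoint_cons. Qed.

Definition Inv (s s' : list step) (m : nat) : Prop :=
  exists b o1 o2, (b <= m)%nat /\ 0 <= o1 /\ 0 <= o2 /\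
    pt s m = (fst (pt s b) + o1, snd (pt s b) + o2) /\
    pt s' m = (snd (pt s b) + o1, fst (pt s b) + o2) /\
    pt s' b = (snd (pt s b), fst (pt s b)).

Lemma phi_inv s m : (m <= length s)%nat -> Inv s (phi s) m.
Proof.
  revert m. induction s as [s IH] using len_ind. intros m Hm.
  destruct s as [|h tl].
  - simpl in Hm. assert (m = 0%nat) by lia. subst. exists 0%nat, 0, 0.
    rewrite phi_nil. repeat split; try lia.
  - destruct (Nat.eq_dec (maxloop (h::tl)) 0) as [E|E].
    + rewrite phi_free by auto. destruct m as [|m].
      * exists 0%nat, 0, 0. rewrite !pt_0. repeat split; lia.
      * simpl length in Hm. destruct (IH tl ltac:(simpl; lia) m ltac:(lia))
          as (b & o1 & o2 & Hb & Ho1 & Ho2 & E1 & E2 & E3).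
        exists (S b), o1, o2. rewrite !pt_cons, E1, E2, E3, delta_swp. simpl.
        repeat split; try lia; apply pair_eq; simpl; lia.
    + set (k := maxloop (h::tl)) in *. set (s := h :: tl) in *.
      assert (HQ := maxloop_QP s ltac:(lia)). fold k in HQ.
      assert (Hk := maxloop_le s). fold k in Hk.
      assert (Hs : s = firstn k s ++ skipn k s) by (symmetry; apply firstn_skipn).
      assert (Ht : length (firstn k s) = k) by (rewrite length_firstn; lia).
      assert (Hp : phi s = firstn k s ++ phi (skipn k s)) by (apply phi_block; lia).
      assert (Hend : endpoint (firstn k s) = (0,0)).
      { destruct HQ as (_ & _ & HQ & _). rewrite pt_0 in HQ. unfold pt in HQ. auto. }
      destruct (Nat.le_gt_cases m k) as [Hmk|Hmk].
      * exists 0%nat, (fst (pt s m)), (snd (pt s m)). rewrite !pt_0. simpl.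
        destruct HQ as (_ & _ & _ & HQ4). specialize (HQ4 m ltac:(lia)). rewrite pt_0 in HQ4.
        simpl in HQ4. repeat split; try lia.
        -- apply pair_eq; simpl; lia.
        -- assert (Pm : pt s m = pt (firstn k s) m).
           { rewrite Hs at 1. rewrite pt_app_l by lia. auto. }
           rewrite Hp, pt_app_l by lia. rewrite Pm. apply pair_eq; simpl; lia.
      * assert (Hlr : (length (skipn k s) < length s)%nat) by (rewrite length_skipn; lia).
        destruct (IH (skipn k s) Hlr (m - k)%nat ltac:(rewrite length_skipn; lia))
          as (b & o1 & o2 & Hb & Ho1 & Ho2 & E1 & E2 & E3).
        exists (k + b)%nat, o1, o2.
        assert (Pm : pt s m = pt (skipn k s) (m - k)).
        { rewrite Hs at 1. rewrite pt_app_r by lia. rewrite Hend, Ht. apply pair_eq; simpl; lia. }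
        assert (Pb : pt s (k + b) = pt (skipn k s) b).
        { rewrite Hs at 1. rewrite pt_app_r by lia. rewrite Hend, Ht.
          replace (k + b - k)%nat with b by lia. apply pair_eq; simpl; lia. }
        assert (Qm : pt (phi s) m = pt (phi (skipn k s)) (m - k)).
        { rewrite Hp. rewrite pt_app_r by lia. rewrite Hend, Ht. apply pair_eq; simpl; lia. }
        assert (Qb : pt (phi s) (k + b) = pt (phi (skipn k s)) b).
        { rewrite Hp. rewrite pt_app_r by lia. rewrite Hend, Ht.
          replace (k + b - k)%nat with b by lia. apply pair_eq; simpl; lia. }
        rewrite Pm, Pb, Qm, Qb. repeat split; auto; lia.
Qed.

Lemma Inv_QP s s' : length s = length s' -> (forall m, (m <= length s)%nat -> Inv s s' m) ->
  forall j, QP_subloop s 0 j -> QP_subloop s' 0 j.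
Proof.
  intros L H j (A1 & A2 & A3 & A4). rewrite pt_0 in A3, A4.
  assert (Hj := H j A2). destruct Hj as (b & o1 & o2 & Hb & Ho1 & Ho2 & E1 & E2 & E3).
  assert (Hb0 := A4 b ltac:(lia)). simpl in Hb0.
  rewrite <- A3 in E1. rewrite pair_eq_iff in E1. simpl in E1.
  split; [lia|split;[lia|split]].
  - rewrite pt_0, E2. apply pair_eq; simpl; lia.
  - intros m Hm. rewrite pt_0. destruct (H m ltac:(lia)) as (c & p1 & p2 & Hc & Hp1 & Hp2 & F1 & F2 & F3).
    assert (Hc0 := A4 c ltac:(lia)). simpl in Hc0. rewrite F2. simpl. lia.
Qed.
Open Scope Z_scope.

Lemma Inv_sym s s' m : Inv s s' m -> Inv s' s m.
Proof.
  intros (b & o1 & o2 & Hb & Ho1 & Ho2 & E1 & E2 & E3).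
  exists b, o1, o2. rewrite E3. simpl. repeat split; auto.
  all: try (rewrite E1; apply pair_eq; simpl; lia).
  all: try (rewrite E2; apply pair_eq; simpl; lia).
  all: destruct (pt s b); reflexivity.
Qed.

Lemma phi_QP s j : QP_subloop (phi s) 0 j <-> QP_subloop s 0 j.
Proof.
  split.
  - apply Inv_QP; [apply phi_length|]. intros m Hm. apply Inv_sym, phi_inv.
    rewrite phi_length in Hm; auto.
  - apply Inv_QP; [symmetry; apply phi_length|]. intros m Hm. apply phi_inv; auto.
Qed.

Lemma phi_maxloop s : maxloop (phi s) = maxloop s.
Proof. apply maxloop_ext; [apply phi_QP|apply phi_length]. Qed.

Lemma phi_endpoint s : endpoint (phi s) = (snd (endpoint s), fst (endpoint s)).
Proof.
  induction s as [s IH] using len_ind. destruct s as [|h tl]; [reflexivity|].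
  destruct (Nat.eq_dec (maxloop (h::tl)) 0) as [E|E].
  - rewrite phi_free by auto. rewrite !endpoint_cons, IH by (simpl; lia).
    rewrite delta_swp. reflexivity.
  - set (s := h :: tl) in *. set (k := maxloop s) in *.
    assert (HQ := maxloop_QP s ltac:(lia)). fold k in HQ.
    assert (Hend : endpoint (firstn k s) = (0,0)).
    { destruct HQ as (_ & _ & HQ & _). rewrite pt_0 in HQ. unfold pt in HQ. auto. }
    rewrite phi_block by lia. fold k.
    rewrite endpoint_app, IH by (rewrite length_skipn; subst s; simpl length; lia).
    assert (Es : endpoint s = endpoint (skipn k s)).
    { rewrite <- (firstn_skipn k s) at 1. rewrite endpoint_app, Hend. apply pair_eq; simpl; lia. }
    rewrite Es, Hend. apply pair_eq; simpl; lia.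
Qed.

Lemma phi_halfplane s : (forall k, (k <= length s)%nat -> 0 <= fst (pt s k) + snd (pt s k)) ->
  forall k, (k <= length (phi s))%nat -> 0 <= fst (pt (phi s) k) + snd (pt (phi s) k).
Proof.
  intros H k Hk. rewrite phi_length in Hk.
  destruct (phi_inv s k Hk) as (b & o1 & o2 & Hb & Ho1 & Ho2 & E1 & E2 & E3).
  specialize (H b ltac:(lia)). rewrite E2. simpl. lia.
Qed.

Lemma phi_phi s : phi (phi s) = s.
Proof.
  induction s as [s IH] using len_ind. destruct s as [|h tl]; [reflexivity|].
  destruct (Nat.eq_dec (maxloop (h::tl)) 0) as [E|E].
  - assert (E' : maxloop (phi (h :: tl)) = 0%nat) by (rewrite phi_maxloop; auto).
    rewrite phi_free in E' |- * by auto. rewrite phi_free by auto.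
    rewrite swp_swp, IH by (simpl; lia). reflexivity.
  - set (s := h :: tl) in *.
    assert (E' : (0 < maxloop (phi s))%nat) by (rewrite phi_maxloop; lia).
    rewrite (phi_block (phi s)) by auto. rewrite phi_maxloop.
    set (k := maxloop s) in *.
    assert (Hk := maxloop_le s). fold k in Hk.
    rewrite (phi_block s) by lia. fold k.
    assert (Ht : length (firstn k s) = k) by (rewrite length_firstn; lia).
    rewrite firstn_app, skipn_app, Ht, Nat.sub_diag. simpl.
    rewrite firstn_all2 by lia. rewrite skipn_all2 by lia. simpl.
    rewrite IH by (rewrite length_skipn; subst s; simpl length; lia).
    rewrite app_nil_r. apply firstn_skipn.
Qed.
Open Scope Z_scope.

Definition bad (a b : step) : Prop := (a = StE /\ b = StS) \/ (a = StN /\ b = StW).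

Definition eagerI (w : list step) : Prop :=
  forall i, (S i < length w)%nat -> ~ bad (nth i w StN) (nth (S i) w StN).

Lemma skipn_nth_cons (w : list step) i : (i < length w)%nat ->
  skipn i w = nth i w StN :: skipn (S i) w.
Proof.
  revert i; induction w as [|a w IH]; intros i Hi; simpl in Hi; [lia|].
  destruct i; [reflexivity|]. simpl. apply IH; lia.
Qed.

Lemma eager_iff w : eager w <-> eagerI w.
Proof.
  split.
  - intros [H1 H2] i Hi Hb.
    assert (Hw : w = firstn i w ++ nth i w StN :: nth (S i) w StN :: skipn (S (S i)) w).
    { rewrite <- (skipn_nth_cons w (S i)) by lia. rewrite <- skipn_nth_cons by lia.
      symmetry; apply firstn_skipn. }
    destruct Hb as [[A B]|[A B]]; rewrite A, B in Hw; eauto.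
  - intros H; split; intros (u & v & Hw); subst w;
    apply (H (length u)); try (rewrite length_app; simpl; lia);
    rewrite app_nth2 by lia; rewrite Nat.sub_diag;
    rewrite app_nth2 by lia; replace (S (length u) - length u)%nat with 1%nat by lia;
    simpl; unfold bad; auto.
Qed.

Lemma eagerI_app_r u v : eagerI (u ++ v) -> eagerI v.
Proof.
  intros H i Hi. specialize (H (length u + i)%nat). rewrite length_app in H.
  rewrite !app_nth2 in H by lia.
  replace (length u + i - length u)%nat with i in H by lia.
  replace (S (length u + i) - length u)%nat with (S i) in H by lia. apply H; lia.
Qed.

Lemma phi_head s : s <> [] ->
  nth 0 (phi s) StN = swp (nth 0 s StN) \/ nth 0 (phi s) StN = StN \/ nth 0 (phi s) StN = StE.
Proof.
  intros Hs. destruct s as [|h tl]; [congruence|].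
  destruct (Nat.eq_dec (maxloop (h::tl)) 0) as [E|E].
  - rewrite phi_free by auto. left; reflexivity.
  - right. rewrite phi_block by lia. set (k := maxloop (h::tl)) in *.
    assert (HQ := maxloop_QP (h::tl) ltac:(lia)). fold k in HQ.
    rewrite app_nth1 by (rewrite length_firstn; pose proof (maxloop_le (h::tl)); lia).
    rewrite nth_firstn. destruct (Nat.ltb_spec 0 k); [|lia].
    apply (QP_first _ k HQ). lia.
Qed.

Lemma bad_swp a b : bad (swp a) (swp b) -> bad a b.
Proof. unfold bad; destruct a, b; simpl; intuition congruence. Qed.

Lemma phi_eager s : eagerI s -> eagerI (phi s).
Proof.
  induction s as [s IH] using len_ind. intros Hs.
  destruct s as [|h tl]; [rewrite phi_nil; intros i Hi; simpl in Hi; lia|].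
  destruct (Nat.eq_dec (maxloop (h::tl)) 0) as [E|E].
  - rewrite phi_free by auto.
    assert (Htl : eagerI tl) by (apply (eagerI_app_r [h]); auto).
    intros i Hi. simpl length in Hi. rewrite phi_length in Hi. destruct i as [|i].
    + destruct tl as [|h2 tl2]; [simpl in Hi; lia|].
      simpl nth. intros Hb.
      destruct (phi_head (h2 :: tl2) ltac:(congruence)) as [A|[A|A]]; rewrite A in Hb.
      * apply bad_swp in Hb. apply (Hs 0%nat); [simpl; lia|]. simpl. auto.
      * destruct Hb as [[_ X]|[_ X]]; discriminate.
      * destruct Hb as [[_ X]|[_ X]]; discriminate.
    + simpl nth. apply (IH tl); simpl; try lia; auto. rewrite phi_length. lia.
  - set (s := h :: tl) in *. set (k := maxloop s) in *.
    assert (HQ := maxloop_QP s ltac:(lia)). fold k in HQ.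
    assert (Hk := maxloop_le s). fold k in Hk.
    assert (Ht : length (firstn k s) = k) by (rewrite length_firstn; lia).
    assert (Hr : eagerI (skipn k s)) by (apply (eagerI_app_r (firstn k s)); rewrite firstn_skipn; auto).
    rewrite phi_block by lia. fold k.
    intros i Hi. rewrite length_app, Ht, phi_length in Hi.
    destruct (Nat.lt_ge_cases (S i) k) as [H1|H1].
    + rewrite !app_nth1 by lia. rewrite !nth_firstn.
      destruct (Nat.ltb_spec i k), (Nat.ltb_spec (S i) k); try lia. apply Hs. lia.
    + destruct (Nat.eq_dec (S i) k) as [H2|H2].
      * rewrite app_nth1 by lia. rewrite nth_firstn. destruct (Nat.ltb_spec i k); [|lia].
        assert (L := QP_last s k HQ ltac:(lia)). replace (k - 1)%nat with i in L by lia.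
        intros [[X _]|[X _]]; destruct L as [L|L]; congruence.
      * rewrite !app_nth2 by lia. rewrite Ht.
        replace (S i - k)%nat with (S (i - k)) by lia.
        apply (IH (skipn k s)); auto.
        -- rewrite length_skipn; subst s; simpl length; lia.
        -- rewrite phi_length. lia.
Qed.
Open Scope Z_scope.

Lemma phi_standard s : standard s -> standard (phi s).
Proof.
  induction s as [s IH] using len_ind. intros Hs.
  destruct s as [|h tl]; [rewrite phi_nil; auto|].
  destruct (Nat.eq_dec (maxloop (h::tl)) 0) as [E|E].
  - intros i j Hij HQ. destruct i as [|i].
    + rewrite phi_QP in HQ. exfalso. apply (maxloop_max (h::tl) j); auto. lia.
    + rewrite phi_free in HQ |- * by auto. change (swp h :: phi tl) with ([swp h] ++ phi tl) in HQ.
      apply QP_app_r in HQ; [|simpl; lia|lia]. simpl length in HQ.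
      simpl nth. replace i with (S i - 1)%nat by lia.
      apply (IH tl ltac:(simpl; lia)) with (j := (j - 1)%nat); auto; [|lia].
      apply (standard_app_r [h]); auto.
  - set (s := h :: tl) in *. set (k := maxloop s) in *.
    assert (HQk := maxloop_QP s ltac:(lia)). fold k in HQk.
    assert (Hk := maxloop_le s). fold k in Hk.
    assert (Ht : length (firstn k s) = k) by (rewrite length_firstn; lia).
    assert (Hr : standard (skipn k s)) by (apply (standard_app_r (firstn k s)); rewrite firstn_skipn; auto).
    assert (Hp : phi s = firstn k s ++ phi (skipn k s)) by (apply phi_block; lia).
    intros i j Hij HQ.
    destruct (Nat.le_gt_cases k i) as [H1|H1].
    + rewrite Hp in HQ |- *. apply QP_app_r in HQ; [|lia|lia]. rewrite Ht in HQ.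
      rewrite app_nth2 by lia. rewrite Ht.
      apply (IH (skipn k s)) with (j := (j - k)%nat); auto; [|lia].
      rewrite length_skipn; subst s; simpl length; lia.
    + destruct (Nat.le_gt_cases j k) as [H2|H2].
      * rewrite Hp in HQ |- *. apply (QP_app_l (firstn k s) (phi (skipn k s)) i j) in HQ; [|rewrite ?length_firstn; lia].
        rewrite app_nth1 by (rewrite ?length_firstn; lia). rewrite nth_firstn. destruct (Nat.ltb_spec i k); [|lia].
        apply (Hs i j Hij).
        rewrite <- (firstn_skipn k s). apply QP_app_l; auto; rewrite ?length_firstn; lia.
      * exfalso. assert (HQk' : QP_subloop (phi s) 0 k) by (apply phi_QP; auto).
        assert (HQj := QP_merge _ _ _ _ HQk' HQ ltac:(lia)).
        rewrite phi_QP in HQj. apply (maxloop_max s j); auto.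
Qed.
Open Scope Z_scope.

Lemma phi_big w : big_walk w -> big_walk (phi w).
Proof.
  intros (H1 & H2 & H3 & H4). split; [|split; [|split]].
  - apply phi_standard; auto.
  - apply eager_iff, phi_eager, eager_iff; auto.
  - apply phi_halfplane; auto.
  - rewrite phi_endpoint. simpl. lia.
Qed.

Lemma phi_left w : big_walk w -> (0 < fst (endpoint w)) -> left_walk (phi w).
Proof.
  intros H Hx. split; [apply phi_big; auto|].
  destruct H as (_ & _ & _ & H4). rewrite phi_endpoint. simpl. lia.
Qed.

Lemma first_step_halfplane v : (forall k, (k <= length v)%nat -> 0 <= fst (pt v k) + snd (pt v k)) ->
  (0 < length v)%nat -> nth 0 v StN = StN \/ nth 0 v StN = StE.
Proof.
  intros H Hl. specialize (H 1%nat ltac:(lia)). rewrite pt_S in H by lia. rewrite pt_0 in H.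
  simpl in H. destruct (nth 0 v StN); simpl in H; auto; lia.
Qed.

Lemma big_app u v : big_walk u -> big_walk v -> big_walk (u ++ v).
Proof.
  intros (U1 & U2 & U3 & U4) (V1 & V2 & V3 & V4).
  split; [|split; [|split]].
  - intros i j Hij HQ.
    destruct (Nat.le_gt_cases j (length u)) as [A|A].
    + apply (QP_app_l u v i j) in HQ; auto. rewrite app_nth1 by (destruct HQ; lia). apply (U1 i j); auto.
    + destruct (Nat.le_gt_cases (length u) i) as [B|B].
      * apply (QP_app_r u v i j) in HQ; [|lia|lia]. rewrite app_nth2 by lia.
        apply (V1 _ (j - length u)%nat); auto; lia.
      * rewrite app_nth1 by lia. apply (U1 i (length u)); [lia|].
        destruct HQ as (Q1 & Q2 & Q3 & Q4).
        assert (Hu := Q4 (length u) ltac:(lia)).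
        rewrite (pt_app_l u v (length u)), (pt_app_l u v i) in Hu by lia.
        rewrite (pt_all u (length u)) in Hu by lia. assert (Hi := U3 i ltac:(lia)).
        assert (Pi : pt u i = endpoint u) by (apply pair_eq; lia).
        split; [lia|split;[lia|split]].
        -- rewrite Pi, pt_all; auto.
        -- intros m Hm. assert (Hm' := Q4 m ltac:(lia)).
           rewrite (pt_app_l u v m), (pt_app_l u v i) in Hm' by lia. auto.
  - apply eager_iff. apply eager_iff in U2, V2.
    intros i Hi. rewrite length_app in Hi.
    destruct (Nat.lt_ge_cases (S i) (length u)) as [A|A].
    + rewrite !app_nth1 by lia. apply U2; auto.
    + destruct (Nat.eq_dec (S i) (length u)) as [B|B].
      * rewrite (app_nth1 u v StN (n:=i)) by lia. rewrite (app_nth2 u v StN (n:=S i)) by lia. rewrite B, Nat.sub_diag.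
        destruct (first_step_halfplane v V3 ltac:(lia)) as [C|C]; rewrite C;
        intros [[_ X]|[_ X]]; discriminate.
      * rewrite !app_nth2 by lia. replace (S i - length u)%nat with (S (i - length u)) by lia.
        apply V2. lia.
  - intros k Hk. rewrite length_app in Hk. destruct (Nat.le_gt_cases k (length u)).
    + rewrite pt_app_l by lia. auto.
    + rewrite pt_app_r by lia. simpl. specialize (V3 (k - length u)%nat ltac:(lia)). lia.
  - rewrite endpoint_app. simpl. lia.
Qed.

Lemma big_nil : big_walk [].
Proof.
  split; [|split; [|split]].
  - intros i j Hij (_ & H & _). simpl in H. lia.
  - split; intros (u & v & H); destruct u; discriminate.
  - intros k Hk. simpl in Hk. assert (k = 0%nat) by lia. subst. simpl. lia.
  - simpl. lia.
Qed.

Lemma big_NS : big_walk [StN; StS].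
Proof.
  split; [|split; [|split]].
  - intros i j Hij (_ & H & H3 & _). simpl in H.
    destruct i as [|[|i]]; [reflexivity| |lia].
    destruct j as [|[|[|j]]]; try lia. unfold pt in H3. simpl in H3. discriminate.
  - split; intros (u & v & H); destruct u as [|a [|b [|c u]]]; simpl in H; try discriminate;
    inversion H.
  - intros k Hk. simpl in Hk. destruct k as [|[|[|k]]]; try lia; unfold pt; simpl; lia.
  - simpl. lia.
Qed.
Open Scope nat_scope.

Lemma length_flat_map_const {A B} (f : A -> list B) (l : list A) c :
  (forall a, In a l -> length (f a) = c) -> length (flat_map f l) = length l * c.
Proof.
  induction l as [|a l IH]; intros H; simpl; auto.
  rewrite length_app, H, IH; simpl; auto; intros; apply H; simpl; auto.
Qed.

Lemma NoDup_concat_pairs (L1 L2 : list (list step)) m :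
  NoDup L1 -> NoDup L2 -> (forall u, In u L1 -> length u = m) ->
  NoDup (flat_map (fun u => map (fun v => u ++ v) L2) L1).
Proof.
  intros H1 H2 HL. induction H1 as [|u L1 Hu H1 IH]; simpl; [constructor|].
  apply NoDup_app.
  - apply FinFun.Injective_map_NoDup; auto. intros x y E. eapply app_inv_head; eauto.
  - apply IH. intros; apply HL; simpl; auto.
  - intros a Ha Hb. apply in_map_iff in Ha. destruct Ha as (v & <- & Hv).
    apply in_flat_map in Hb. destruct Hb as (u' & Hu' & Hb). apply in_map_iff in Hb.
    destruct Hb as (v' & E & Hv').
    assert (Lu : length u = m) by (apply HL; simpl; auto).
    assert (Lu' : length u' = m) by (apply HL; simpl; auto).
    assert (u' = u).
    { assert (F : forall (x y : list step), firstn (length x) (x ++ y) = x).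
      { intros x y. rewrite firstn_app, Nat.sub_diag, firstn_all. simpl. apply app_nil_r. }
      simpl in E. rewrite <- (F u' v'), E. replace (length u') with (length u) by lia. apply F. }
    subst; contradiction.
Qed.

Lemma supermult (b : nat -> nat) : counts big_walk b -> forall m n, b m * b n <= b (m + n).
Proof.
  intros Hb m n.
  destruct (Hb m) as (Lm & Nm & Im & Em). destruct (Hb n) as (Ln & Nn & In_ & En).
  destruct (Hb (m + n)) as (L & N & I & E).
  rewrite <- Em, <- En, <- E.
  rewrite <- (length_flat_map_const (fun u => map (fun v => u ++ v) Ln) Lm (length Ln))
    by (intros; apply length_map).
  apply NoDup_incl_length.
  - apply (NoDup_concat_pairs _ _ (2 * m)); auto. intros u Hu; apply Im; auto.
  - intros w Hw. apply in_flat_map in Hw. destruct Hw as (u & Hu & Hw).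
    apply in_map_iff in Hw. destruct Hw as (v & <- & Hv).
    apply Im in Hu. apply In_ in Hv. apply I. split.
    + rewrite length_app. lia.
    + apply big_app; tauto.
Qed.

Fixpoint allw (k : nat) : list (list step) :=
  match k with
  | O => [[]]
  | S k' => flat_map (fun s => map (cons s) (allw k')) [StN; StE; StS; StW]
  end.

Lemma allw_in k w : length w = k -> In w (allw k).
Proof.
  revert w; induction k as [|k IH]; intros w Hw.
  - destruct w; simpl in *; [auto|lia].
  - destruct w as [|s w]; simpl in Hw; [lia|]. change (allw (S k)) with (flat_map (fun s => map (cons s) (allw k)) [StN; StE; StS; StW]). apply in_flat_map.
    exists s. split; [destruct s; simpl; tauto|]. apply in_map. apply IH; lia.
Qed.

Lemma allw_length k : length (allw k) = 4 ^ k.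
Proof.
  induction k as [|k IH]; simpl; auto.
  rewrite !length_app, !length_map, IH. simpl. lia.
Qed.

Lemma b_bound (b : nat -> nat) : counts big_walk b -> forall n, b n <= 16 ^ n.
Proof.
  intros Hb n. destruct (Hb n) as (L & N & I & E). rewrite <- E.
  replace (16 ^ n) with (4 ^ (2 * n)) by (rewrite Nat.pow_mul_r; reflexivity).
  rewrite <- allw_length. apply NoDup_incl_length; auto.
  intros w Hw. apply allw_in. apply I; auto.
Qed.

Lemma bh_le_b (b bh : nat -> nat) : counts big_walk b -> counts left_walk bh -> forall n, bh n <= b n.
Proof.
  intros Hb Hbh n. destruct (Hb n) as (L & N & I & E). destruct (Hbh n) as (Lh & Nh & Ih & Eh).
  rewrite <- E, <- Eh. apply NoDup_incl_length; auto.
  intros w Hw. apply Ih in Hw. apply I. destruct Hw as (? & ? & ?). auto.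
Qed.

Lemma filter_split {A} (f : A -> bool) l :
  length l = length (filter f l) + length (filter (fun x => negb (f x)) l).
Proof. induction l as [|a l IH]; simpl; auto. destruct (f a); simpl; lia. Qed.

Lemma b_le_2bh (b bh : nat -> nat) : counts big_walk b -> counts left_walk bh -> forall n, b n <= 2 * bh n.
Proof.
  intros Hb Hbh n. destruct (Hb n) as (L & N & I & E). destruct (Hbh n) as (Lh & Nh & Ih & Eh).
  rewrite <- E, <- Eh.
  set (f := fun w : list step => Z.leb (fst (endpoint w)) 0).
  rewrite (filter_split f L).
  assert (A1 : length (filter f L) <= length Lh).
  { apply NoDup_incl_length; [apply NoDup_filter; auto|].
    intros w Hw. apply filter_In in Hw. destruct Hw as (Hw & Hf).
    apply I in Hw. apply Ih. unfold f in Hf. apply Z.leb_le in Hf. split; [tauto|split; tauto]. }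
  assert (A2 : length (filter (fun x => negb (f x)) L) <= length Lh).
  { rewrite <- (length_map phi). apply NoDup_incl_length.
    - apply NoDup_map_NoDup_ForallPairs; [|apply NoDup_filter; auto].
      intros x y _ _ Exy. rewrite <- (phi_phi x), <- (phi_phi y), Exy. auto.
    - intros w Hw. apply in_map_iff in Hw. destruct Hw as (u & <- & Hu).
      apply filter_In in Hu. destruct Hu as (Hu & Hf). apply I in Hu.
      unfold f in Hf. apply Bool.negb_true_iff, Z.leb_gt in Hf.
      apply Ih. split; [rewrite phi_length; tauto|]. apply phi_left; tauto. }
  lia.
Qed.

Lemma b_pos (b : nat -> nat) : counts big_walk b -> forall n, 1 <= b n.
Proof.
  intros Hb.
  assert (H0 : 1 <= b 0).
  { destruct (Hb 0) as (L & N & I & E). rewrite <- E.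
    assert (In [] L) by (apply I; split; [reflexivity|apply big_nil]).
    destruct L; simpl in *; [contradiction|lia]. }
  assert (H1 : 1 <= b 1).
  { destruct (Hb 1) as (L & N & I & E). rewrite <- E.
    assert (In [StN; StS] L) by (apply I; split; [reflexivity|apply big_NS]).
    destruct L; simpl in *; [contradiction|lia]. }
  induction n as [|n IH]; auto.
  pose proof (supermult b Hb n 1). replace (n + 1) with (S n) in H by lia. nia.
Qed.
Open Scope R_scope.

Lemma mult_bound (a : nat -> R) k : (forall m n, a m + a n <= a (m + n)%nat) -> (forall n, 0 <= a n) ->
  forall q, INR q * a k <= a (k * q)%nat.
Proof.
  intros Hs Hp q. induction q as [|q IH].
  - simpl. rewrite Rmult_0_l. apply Hp.
  - rewrite S_INR. replace (k * S q)%nat with (k * q + k)%nat by lia.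
    specialize (Hs (k * q)%nat k). lra.
Qed.

Lemma key_ineq (a : nat -> R) k n : (forall m n, a m + a n <= a (m + n)%nat) -> (forall n, 0 <= a n) ->
  (1 <= k)%nat -> (INR n - INR k) * a k <= INR k * a n.
Proof.
  intros Hs Hp Hk.
  assert (Hdm := Nat.div_mod_eq n k). assert (Hr := Nat.mod_upper_bound n k ltac:(lia)).
  set (q := (n / k)%nat) in *. set (r := (n mod k)%nat) in *.
  assert (A1 : a (k * q)%nat <= a n).
  { rewrite Hdm. specialize (Hs (k * q)%nat r). specialize (Hp r). lra. }
  assert (A2 := mult_bound a k Hs Hp q).
  assert (A3 : INR n = INR k * INR q + INR r) by (rewrite Hdm, plus_INR, mult_INR; auto).
  assert (A4 : INR r < INR k) by (apply lt_INR; auto).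
  assert (A5 := Hp k). assert (A6 : 0 <= INR k) by apply pos_INR.
  assert (A7 : INR n - INR k <= INR k * INR q) by lra.
  apply Rle_trans with (INR k * INR q * a k); [apply Rmult_le_compat_r; auto|].
  rewrite Rmult_assoc. apply Rmult_le_compat_l; auto. lra.
Qed.

Lemma fekete (a : nat -> R) (M : R) : (forall m n, a m + a n <= a (m + n)%nat) -> (forall n, 0 <= a n) ->
  (forall n, a n <= INR n * M) -> exists L, Un_cv (fun n => / INR (S n) * a (S n)) L.
Proof.
  intros Hs Hp Hb.
  set (c := fun n => / INR (S n) * a (S n)).
  assert (Hc : forall n, c n <= M).
  { intros n. unfold c. assert (0 < INR (S n)) by (apply lt_0_INR; lia).
    specialize (Hb (S n)). apply Rmult_le_reg_l with (INR (S n)); auto.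
    rewrite <- Rmult_assoc, Rinv_r by lra. lra. }
  set (E := fun x => exists n, x = c n).
  assert (HB : bound E) by (exists M; intros x [n ->]; auto).
  assert (HE : exists x, E x) by (exists (c 0%nat); exists 0%nat; auto).
  destruct (completeness E HB HE) as [L [HL1 HL2]].
  exists L. intros eps Heps.
  assert (Hk : exists k, L - eps / 2 < c k).
  { apply NNPP. intros Hn.
    assert (is_upper_bound E (L - eps / 2)).
    { intros x [n ->]. destruct (Rle_or_lt (c n) (L - eps / 2)); auto.
      exfalso; apply Hn; exists n; auto. }
    specialize (HL2 _ H). lra. }
  destruct Hk as [k Hk].
  destruct (INR_unbounded (2 * a (S k) / eps)) as [N HN].
  exists N. intros n Hn. unfold R_dist.
  assert (Hcn : c n <= L) by (apply HL1; exists n; auto).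
  assert (K := key_ineq a (S k) (S n) Hs Hp ltac:(lia)).
  assert (P1 : 0 < INR (S n)) by (apply lt_0_INR; lia).
  assert (P2 : 0 < INR (S k)) by (apply lt_0_INR; lia).
  assert (Ak := Hp (S k)).
  assert (L1 : c k - a (S k) / INR (S n) <= c n).
  { unfold c. unfold Rdiv.
    apply Rmult_le_reg_l with (INR (S n) * INR (S k)); [nra|].
    replace (INR (S n) * INR (S k) * (/ INR (S k) * a (S k) - a (S k) * / INR (S n)))
      with ((INR (S n) - INR (S k)) * a (S k)) by (field; lra).
    replace (INR (S n) * INR (S k) * (/ INR (S n) * a (S n)))
      with (INR (S k) * a (S n)) by (field; lra). auto. }
  assert (L2 : a (S k) / INR (S n) < eps / 2).
  { assert (INR N <= INR (S n)) by (apply le_INR; lia).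
    apply Rmult_lt_reg_l with (INR (S n)); auto. unfold Rdiv.
    replace (INR (S n) * (a (S k) * / INR (S n))) with (a (S k)) by (field; lra).
    assert (2 * a (S k) / eps < INR (S n)) by lra.
    apply Rmult_lt_reg_l with (2 / eps). { unfold Rdiv. apply Rmult_lt_0_compat; [lra|]. apply Rinv_0_lt_compat; lra. }
    replace (2 / eps * (INR (S n) * (eps * / 2))) with (INR (S n)) by (field; lra).
    replace (2 / eps * a (S k)) with (2 * a (S k) / eps) by (field; lra). lra. }
  rewrite Rabs_left1 by lra. lra.
Qed.
Open Scope R_scope.

Lemma ln_le' x y : 0 < x -> x <= y -> ln x <= ln y.
Proof. intros H1 H2. destruct H2 as [H2|H2]; [left; apply ln_increasing; auto|subst; lra]. Qed.

Lemma nroot_exp c n : (1 <= c (S n))%nat ->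
  nroot c n = exp (/ INR (S n) * ln (INR (c (S n)))).
Proof. intros; unfold nroot, Rpower. reflexivity. Qed.

Theorem mainTheorem3 (b bh : nat -> nat)
  (Hb : counts big_walk b) (Hbh : counts left_walk bh) :
  (forall m n, (b m * b n <= b (m + n))%nat) /\
  (forall n, (b n <= 16 ^ n)%nat) /\
  (exists l : R, Un_cv (nroot b) l) /\
  (forall n, (b n <= 2 * bh n)%nat) /\
  (exists l : R, Un_cv (nroot b) l /\ Un_cv (nroot bh) l).
Proof.
  assert (SM := supermult b Hb). assert (BD := b_bound b Hb).
  assert (BP := b_pos b Hb). assert (B2 := b_le_2bh b bh Hb Hbh).
  assert (BH := bh_le_b b bh Hb Hbh).
  set (a := fun n => ln (INR (b n))).
  assert (Pb : forall n, 0 < INR (b n)) by (intros n; apply lt_0_INR; specialize (BP n); lia).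
  assert (Ha1 : forall m n, a m + a n <= a (m + n)%nat).
  { intros m n. unfold a. rewrite <- ln_mult by auto. apply ln_le'.
    - apply Rmult_lt_0_compat; auto.
    - rewrite <- mult_INR. apply le_INR. auto. }
  assert (Ha2 : forall n, 0 <= a n).
  { intros n. unfold a. rewrite <- ln_1. apply ln_le'; [lra|]. apply (le_INR 1). auto. }
  assert (Ha3 : forall n, a n <= INR n * ln 16).
  { intros n. unfold a. rewrite <- ln_pow by lra. apply ln_le'; auto.
    replace 16 with (INR 16) by (simpl; lra). rewrite <- pow_INR. apply le_INR; auto. }
  destruct (fekete a (ln 16) Ha1 Ha2 Ha3) as [L HL].
  assert (Hcont : continuity_pt exp L) by (apply derivable_continuous_pt, derivable_exp).
  assert (Hlb : Un_cv (nroot b) (exp L)).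
  { apply (continuity_seq exp _ L Hcont) in HL. intros eps Heps.
    destruct (HL eps Heps) as [N HN]. exists N. intros n Hn.
    rewrite nroot_exp by auto. apply HN; auto. }
  assert (Hlbh : Un_cv (nroot bh) (exp L)).
  { set (ch := fun n => / INR (S n) * ln (INR (bh (S n)))).
    assert (Hch : Un_cv ch L).
    { intros eps Heps. destruct (HL (eps / 2) ltac:(lra)) as [N1 HN1].
      destruct (INR_unbounded (2 * ln 2 / eps)) as [N2 HN2].
      exists (N1 + N2)%nat. intros n Hn. specialize (HN1 n ltac:(lia)). unfold R_dist in *.
      assert (P1 : 0 < INR (S n)) by (apply lt_0_INR; lia).
      assert (Qh : 0 < INR (bh (S n))).
      { apply lt_0_INR. specialize (B2 (S n)). specialize (BP (S n)). lia. }
      assert (U : ln (INR (bh (S n))) <= a (S n)).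
      { unfold a. apply ln_le'; auto. apply le_INR; auto. }
      assert (D : a (S n) - ln 2 <= ln (INR (bh (S n)))).
      { unfold a, Rminus. rewrite <- ln_Rinv by lra. rewrite <- ln_mult by (auto; apply Rinv_0_lt_compat; lra).
        apply ln_le'. { apply Rmult_lt_0_compat; auto. apply Rinv_0_lt_compat; lra. }
        specialize (B2 (S n)). apply le_INR in B2. rewrite mult_INR in B2. simpl in B2.
        replace (1 + 1) with 2 in B2 by lra. apply Rmult_le_reg_l with 2; [lra|].
        replace (2 * (INR (b (S n)) * / 2)) with (INR (b (S n))) by (field). auto. }
      assert (ln2p : 0 < ln 2) by (pose proof ln_lt_2; lra).
      assert (T : ln 2 / INR (S n) < eps / 2).
      { assert (INR N2 <= INR (S n)) by (apply le_INR; lia).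
        apply Rmult_lt_reg_l with (INR (S n)); auto. unfold Rdiv.
        replace (INR (S n) * (ln 2 * / INR (S n))) with (ln 2) by (field; lra).
        assert (2 * ln 2 / eps < INR (S n)) by lra.
        apply Rmult_lt_reg_l with (2 / eps). { unfold Rdiv. apply Rmult_lt_0_compat; [lra|]. apply Rinv_0_lt_compat; lra. }
        replace (2 / eps * (INR (S n) * (eps * / 2))) with (INR (S n)) by (field; lra).
        replace (2 / eps * ln 2) with (2 * ln 2 / eps) by (field; lra). lra. }
      assert (V1 : ch n <= / INR (S n) * a (S n)).
      { unfold ch. apply Rmult_le_compat_l; auto. left; apply Rinv_0_lt_compat; auto. }
      assert (V2 : / INR (S n) * a (S n) - ln 2 / INR (S n) <= ch n).
      { unfold ch. unfold Rdiv. rewrite (Rmult_comm (ln 2)), <- Rmult_minus_distr_l.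
        apply Rmult_le_compat_l; auto. left; apply Rinv_0_lt_compat; auto. }
      apply Rabs_def1; apply Rabs_def2 in HN1; destruct HN1; lra. }
    apply (continuity_seq exp _ L Hcont) in Hch. intros eps Heps.
    destruct (Hch eps Heps) as [N HN]. exists N. intros n Hn.
    rewrite nroot_exp. { apply HN; auto. }
    specialize (B2 (S n)). specialize (BP (S n)). lia. }
  split; [|split; [|split; [|split]]]; auto.
  - exists (exp L); auto.
  - exists (exp L); auto.
Qed.
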